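(* Let $w(A,B)\in\mathbb F_2=\langle A,B\rangle$ and $m=(m_1)$ with $m_1\in\mathbb Z$. The representation $\Theta_2^{w,m}\colon FVB_2\to\mathrm{Aut}(\mathbb F_4)$ is not faithful if and only if $$w(A,B)=A^{k_1}B^{k_2}\cdots A^{k_r}B^{-k_r}\cdots A^{-k_2}B^{-k_1}A^{m_1}$$ for some integers $k_1,\dots,k_r$ (letters alternating between $A$ and $B$), all nonzero except possibly $k_1$ and $k_r$. In this case $\operatorname{Ker}(\Theta_2^{w,m})=X_2\cong\mathbb Z$, where $X_2=FVP_2\cap FVK_2$ is generated by $(\rho_1\sigma_1)^2$. For all other words $w$ the representation $\Theta_2^{w,m}$ is faithful.
   Context: $FVB_2$ is the group with generators $\sigma_1,\rho_1$ and defining relations $\sigma_1^2=\rho_1^2=1$. $\mathbb F_4$ is the free group on $x_1,x_2,y_1,y_2$; automorphisms compose left to right, $(\varphi\psi)(f)=\psi(\varphi(f))$; generators not mentioned are fixed. $\Theta_2^{w,m}\colon FVB_2\to\mathrm{Aut}(\mathbb F_4)$ is the homomorphism given by $\Theta_2^{w,m}(\sigma_1): x_1\mapsto x_2\,w(y_1,y_2),\ x_2\mapsto x_1\,w(y_1,y_2)^{-1}$ and $\Theta_2^{w,m}(\rho_1): x_1\mapsto x_2y_2^{m_1},\ x_2\mapsto x_1y_1^{-m_1},\ y_1\mapsto y_2,\ y_2\mapsto y_1$. Let $S_2=\langle\sigma_1\rangle$, $S_2'=\langle\rho_1\rangle$; $\pi_2\colon FVB_2\to S_2$ with $\pi_2(\sigma_1)=\pi_2(\rho_1)=\sigma_1$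 and $FVP_2=\operatorname{Ker}\pi_2$; $\nu_2\colon FVB_2\to S_2'$ with $\nu_2(\sigma_1)=1$, $\nu_2(\rho_1)=\rho_1$ and $FVK_2=\operatorname{Ker}\nu_2$. *)

(* Defs.v *)
(* Free groups are modelled by words over an alphabet of
   signed letters; two words denote the same group element iff their free
   reductions coincide. *)
From mathcomp Require Import all_boot ssralg ssrint.
Set Implicit Arguments. Unset Strict Implicit. Unset Printing Implicit Defensive.
Import GRing.Theory.

(* a letter (a, e): generator a, with exponent -1 iff e = true *)
Definition word (T : eqType) := seq (T * bool).

Definition inv_letter (T : eqType) (l : T * bool) : T * bool := (l.1, ~~ l.2).

Fixpoint freduce (T : eqType) (w : word T) : word T :=
  match w with
  | [::] => [::]
  | l :: w' =>
      match freduce w' with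
      | l' :: r => if l' == inv_letter l then r else l :: l' :: r
      | [::] => [:: l]
      end
  end.

Definition feq (T : eqType) (u v : word T) := freduce u = freduce v.

Definition finv (T : eqType) (w : word T) : word T := rev (map (@inv_letter T) w).

Definition gpow (T : eqType) (a : T) (k : int) : word T :=
  match k with
  | Posz n => nseq n (a, false)
  | Negz n => nseq n.+1 (a, true)
  end.

Definition fsubst (T U : eqType) (phi : T -> word U) (w : word T) : word U :=
  flatten (map (fun l => if l.2 then finv (phi l.1) else phi l.1) w).

Definition gA : 'I_2 := @Ordinal 2 0 isT.
Definition gB : 'I_2 := @Ordinal 2 1 isT.
Definition x1 : 'I_4 := @Ordinal 4 0 isT.
Definition x2 : 'I_4 := @Ordinal 4 1 isT.
Definition y1 : 'I_4 := @Ordinal 4 2 isT.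
Definition y2 : 'I_4 := @Ordinal 4 3 isT.

Definition wy (w : word 'I_2) : word 'I_4 :=
  fsubst (fun a : 'I_2 => [:: (if a == gA then y1 else y2, false)]) w.

Definition theta_sigma (w : word 'I_2) (x : 'I_4) : word 'I_4 :=
  if x == x1 then (x2, false) :: wy w
  else if x == x2 then (x1, false) :: finv (wy w)
  else [:: (x, false)].

Definition theta_rho (m1 : int) (x : 'I_4) : word 'I_4 :=
  if x == x1 then (x2, false) :: gpow y2 m1
  else if x == x2 then (x1, false) :: gpow y1 (- m1)
  else if x == y1 then [:: (y2, false)]
  else [:: (y1, false)].

(* ---------- FVB_2 = < sigma_1, rho_1 | sigma_1^2 = rho_1^2 = 1 > ----------
   Elements are words g : seq bool, true = sigma_1, false = rho_1 (both are
   involutions, so no inverse letters are needed). *)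
Fixpoint breduce (g : seq bool) : seq bool :=
  match g with
  | [::] => [::]
  | s :: g' =>
      match breduce g' with
      | s' :: r => if s' == s then r else s :: s' :: r
      | [::] => [:: s]
      end
  end.

Definition beq (g h : seq bool) := breduce g = breduce h.

(* g ^ n in FVB_2, n : int (inverse of a word = its reverse) *)
Definition bpow (g : seq bool) (n : int) : seq bool :=
  match n with
  | Posz k => flatten (nseq k g)
  | Negz k => flatten (nseq k.+1 (rev g))
  end.

Definition rho_sigma : seq bool := [:: false; true].

(* pi_2 : FVB_2 -> S_2 (value true = sigma_1), nu_2 : FVB_2 -> S_2'
   (value true = rho_1); both well defined on FVB_2. *)
Definition pi2 (g : seq bool) : bool := odd (size g).
Definition nu2 (g : seq bool) : bool := odd (count negb g).
Definition in_FVP2 (g : seq bool) : Prop := pi2 g = false.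
Definition in_FVK2 (g : seq bool) : Prop := nu2 g = false.
Definition in_X2 (g : seq bool) : Prop := in_FVP2 g /\ in_FVK2 g.

(* Theta_2^{w,m}(g) applied to f in F_4; automorphisms compose left to right:
   Theta(s_1 ... s_k)(f) = Theta(s_k)( ... Theta(s_1)(f)). *)
Definition theta_letter (w : word 'I_2) (m1 : int) (s : bool) :=
  if s then theta_sigma w else theta_rho m1.

Definition theta_act (w : word 'I_2) (m1 : int) (g : seq bool)
  (f : word 'I_4) : word 'I_4 :=
  foldl (fun f s => fsubst (theta_letter w m1 s) f) f g.

Definition in_ker_theta (w : word 'I_2) (m1 : int) (g : seq bool) : Prop :=
  forall f : word 'I_4, feq (theta_act w m1 g f) f.

Definition theta_faithful (w : word 'I_2) (m1 : int) : Prop :=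
  forall g : seq bool, in_ker_theta w m1 g -> beq g [::].

Fixpoint alt_word (T : eqType) (a b : T) (ks : seq int) : word T :=
  match ks with
  | [::] => [::]
  | k :: ks' => gpow a k ++ alt_word b a ks'
  end.

Definition special_word (ks : seq int) (m1 : int) : word 'I_2 :=
  alt_word gA gB ks ++ finv (alt_word gB gA ks) ++ gpow gA m1.

(* Main.v *)
Require Import Defs.
From mathcomp Require Import all_boot ssralg ssrint zify.
Import Defs.
From Stdlib Require Import Classical.
Set Implicit Arguments. Unset Strict Implicit. Unset Printing Implicit Defensive.
Import GRing.Theory.

Section FG.
Variable T : eqType.
Implicit Types (u v w x y r : word T) (l : T * bool).

Definition Fr l (x : word T) : word T :=
  match x with
  | l' :: r => if l' == inv_letter l then r else l :: l' :: r
  | [::] => [:: l]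
  end.

Lemma freduce_cons l w : freduce (l :: w) = Fr l (freduce w).
Proof. by []. Qed.

Definition notinv l l' := l' != inv_letter l.
Definition red w := sorted notinv w.

Lemma inv_inv l : inv_letter (inv_letter l) = l.
Proof. by case: l => a []. Qed.

Lemma inv_eq l l' : (inv_letter l == l') = (l == inv_letter l').
Proof. by case: l => a b; case: l' => a' b'; rewrite /inv_letter /= !xpair_eqE; case: b; case: b'; rewrite ?andbF ?andbT // eq_sym. Qed.

Lemma inv_neq l : (inv_letter l == l) = false.
Proof. by case: l => a b; rewrite /inv_letter /= xpair_eqE eqxx; case: b. Qed.

Lemma red_Fr l x : red x -> red (Fr l x).
Proof.
case: x => [|l' r] //= Hr; case: ifP => H.
  by case: r Hr => //= a r /andP [].
by rewrite /red /= /notinv H.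
Qed.

Lemma red_freduce w : red (freduce w).
Proof. by elim: w => //= l w IH; apply: (red_Fr l IH). Qed.

Lemma freduce_red w : red w -> freduce w = w.
Proof.
elim: w => // l w IH Hw; rewrite freduce_cons IH; last by case: w Hw {IH} => //= a w /andP [].
case: w Hw {IH} => //= l' w /andP [H _]; by rewrite /notinv in H; rewrite (negbTE H).
Qed.

Lemma freduceK w : freduce (freduce w) = freduce w.
Proof. exact: freduce_red (red_freduce w). Qed.

Lemma Fr_inv l x : red x -> Fr l (Fr (inv_letter l) x) = x.
Proof.
case: x => [|l' r] /=; first by rewrite eqxx.
rewrite inv_inv; case: (eqVneq l' l) => [-> | Hne] Hr /=.
  case: r Hr => //= l'' r /andP [H _]; by rewrite /notinv in H; rewrite (negbTE H).
by rewrite eqxx.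
Qed.

Lemma freduce_Fr_cat l r v : freduce (Fr l r ++ v) = Fr l (freduce (r ++ v)).
Proof.
case: r => [|l' r] //=; case: ifP => H //=.
move/eqP: H => ->; by rewrite Fr_inv // red_freduce.
Qed.

Lemma freduce_catl u v : freduce (u ++ v) = freduce (freduce u ++ v).
Proof. by elim: u => //= l u IH; rewrite IH freduce_Fr_cat. Qed.

Lemma freduce_catr u v : freduce (u ++ v) = freduce (u ++ freduce v).
Proof. by elim: u => [|l u IH] /=; [rewrite freduceK | rewrite IH]. Qed.

Lemma fr_cat u v : freduce (u ++ v) = freduce (freduce u ++ freduce v).
Proof. by rewrite freduce_catl freduce_catr. Qed.

Lemma feq_refl u : feq u u. Proof. by []. Qed.
Lemma feq_sym u v : feq u v -> feq v u. Proof. by []. Qed.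
Lemma feq_trans u v x : feq u v -> feq v x -> feq u x. Proof. by rewrite /feq => ->. Qed.

Lemma feq_cat u u' v v' : feq u u' -> feq v v' -> feq (u ++ v) (u' ++ v').
Proof. by rewrite /feq fr_cat => -> ->; rewrite -fr_cat. Qed.

Lemma feq_freduce u : feq u (freduce u).
Proof. by rewrite /feq freduceK. Qed.

Lemma finv_cat u v : finv (u ++ v) = finv v ++ finv u.
Proof. by rewrite /finv map_cat rev_cat. Qed.

Lemma finvK u : finv (finv u) = u.
Proof. by rewrite /finv map_rev revK -map_comp map_id_in // => l _ /=; rewrite inv_inv. Qed.

Lemma finv_cons l u : finv (l :: u) = finv u ++ [:: inv_letter l].
Proof. by rewrite /finv /= rev_cons cats1. Qed.

Lemma feq_cancel u : feq (u ++ finv u) [::].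
Proof.
elim: u => //= l u IH; rewrite finv_cons catA /feq freduce_cons freduce_catl.
by rewrite IH /= eqxx.
Qed.

Lemma feq_cancel' u : feq (finv u ++ u) [::].
Proof. by have := feq_cancel (finv u); rewrite finvK. Qed.

Lemma feq_catl u v v' : feq v v' -> feq (u ++ v) (u ++ v').
Proof. by move=> H; apply: feq_cat. Qed.
Lemma feq_catr u u' v : feq u u' -> feq (u ++ v) (u' ++ v).
Proof. by move=> H; apply: feq_cat. Qed.

Lemma feq_nil_cat u v : feq u [::] -> feq (u ++ v) v.
Proof. by move=> H; apply: (feq_trans (feq_catr v H)). Qed.

Lemma feq_cancel_l u v : feq (u ++ finv u ++ v) v.
Proof. by rewrite catA; apply: feq_nil_cat; apply: feq_cancel. Qed.
Lemma feq_cancel_l' u v : feq (finv u ++ u ++ v) v.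
Proof. by rewrite catA; apply: feq_nil_cat; apply: feq_cancel'. Qed.

Lemma feq_finv u v : feq u v -> feq (finv u) (finv v).
Proof.
move=> H; apply: (@feq_trans _ (finv u ++ v ++ finv v)).
  by rewrite -{1}(cats0 (finv u)); apply: feq_catl; apply: feq_sym; apply: feq_cancel.
rewrite catA; apply: feq_nil_cat.
by apply: (feq_trans (feq_catl _ (feq_sym H))); apply: feq_cancel'.
Qed.

End FG.
Section Subst.
Variables T U : eqType.
Implicit Types (u v w x y r : word T) (l : T * bool).
Implicit Types (phi psi : T -> word U).

Definition img phi l := if l.2 then finv (phi l.1) else phi l.1.

Lemma fsubst_cons phi l w : fsubst phi (l :: w) = img phi l ++ fsubst phi w.
Proof. by []. Qed.

Lemma fsubst_cat phi u v : fsubst phi (u ++ v) = fsubst phi u ++ fsubst phi v.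
Proof. by rewrite /fsubst map_cat flatten_cat. Qed.

Lemma img_inv phi l : img phi (inv_letter l) = finv (img phi l).
Proof. by case: l => a [] /=; rewrite /img /= ?finvK. Qed.

Lemma fsubst_finv phi u : fsubst phi (finv u) = finv (fsubst phi u).
Proof.
elim: u => [|l u IH] //; rewrite finv_cons fsubst_cat IH fsubst_cons finv_cat.
by rewrite /fsubst /= cats0 -/(img phi (inv_letter l)) img_inv.
Qed.

Lemma fsubst_Fr phi l r : feq (fsubst phi (Fr l r)) (fsubst phi (l :: r)).
Proof.
case: r => [|l' r] //=; case: ifP => // /eqP ->.
rewrite !fsubst_cons img_inv; apply: feq_sym; apply: feq_cancel_l.
Qed.

Lemma fsubst_freduce phi w : feq (fsubst phi w) (fsubst phi (freduce w)).
Proof.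
elim: w => // l w IH; rewrite freduce_cons.
apply: feq_sym; apply: (feq_trans (fsubst_Fr _ _ _)); rewrite !fsubst_cons.
by apply: feq_catl; apply: feq_sym.
Qed.

Lemma feq_fsubst phi u v : feq u v -> feq (fsubst phi u) (fsubst phi v).
Proof.
move=> H; apply: (feq_trans (fsubst_freduce phi u)); rewrite H.
by apply: feq_sym; apply: fsubst_freduce.
Qed.

Lemma fsubst_pw phi psi w : (forall a, feq (phi a) (psi a)) -> feq (fsubst phi w) (fsubst psi w).
Proof.
move=> H; elim: w => // l w IH; rewrite !fsubst_cons.
apply: feq_cat => //; rewrite /img; case: l.2; last exact: H.
by apply: feq_finv.
Qed.
End Subst.
Lemma fsubst_id (T : eqType) (w : word T) : fsubst (fun a => [:: (a, false)]) w = w.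
Proof. by elim: w => // [[a b]] w IH; rewrite fsubst_cons IH; case: b. Qed.

Lemma fsubst_comp (T U V : eqType) (phi : U -> word V) (psi : T -> word U) w :
  fsubst phi (fsubst psi w) = fsubst (fun a => fsubst phi (psi a)) w.
Proof.
elim: w => // l w IH; rewrite fsubst_cons fsubst_cat IH fsubst_cons; congr (_ ++ _).
by rewrite /img; case: l.2 => //; rewrite fsubst_finv.
Qed.

Section Tors.
Variable T : eqType.
Implicit Types (u v w x y r : word T) (l : T * bool).

Definition pow x k := flatten (nseq k x).

Lemma powS x k : pow x k.+1 = x ++ pow x k. Proof. by []. Qed.

Lemma feq_cancel2 (l : T * bool) Q : feq (l :: inv_letter l :: Q) Q.
Proof.
rewrite /feq !freduce_cons.
by have := Fr_inv l (red_freduce Q).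
Qed.

Lemma feq_cancel2' (l : T * bool) Q : feq (inv_letter l :: l :: Q) Q.
Proof. by have := feq_cancel2 (inv_letter l) Q; rewrite inv_inv. Qed.

Lemma feq_cons l u v : feq u v -> feq (l :: u) (l :: v).
Proof. by move=> H; apply: (@feq_cat _ [:: l] [:: l]). Qed.

Lemma pow_feq x k : feq (pow x k) (pow (freduce x) k).
Proof. elim: k => // k IH; apply: feq_cat => //; exact: feq_freduce. Qed.

Lemma red_pow (x : T * bool) r k : red (x :: r) -> notinv (last x r) x -> red (pow (x :: r) k).
Proof.
move=> Hr Hc; elim: k => // k IH.
rewrite /pow /= -/(pow (x :: r) k) /red /= cat_path.
apply/andP; split; first exact: Hr.
case: k IH => // k; rewrite /pow /= -/(pow (x :: r) k) /red /= => ->.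
by rewrite Hc.
Qed.

Lemma pow_nil x k : (0 < k)%N -> x != [::] -> pow x k != [::].
Proof. by case: k => // k _; case: x. Qed.

Lemma pow_conj (x : T * bool) mid k : (0 < k)%N ->
  feq (pow (x :: rcons mid (inv_letter x)) k) (x :: pow mid k ++ [:: inv_letter x]).
Proof.
case: k => // k _; elim: k => [|k IH].
  by rewrite /pow /= cats0 cats0 cats1.
rewrite powS (powS mid).
apply: feq_trans (feq_catl _ IH) _.
rewrite cat_cons; apply: feq_cons.
rewrite -cats1 -!catA; apply: feq_catl; exact: feq_cancel2'.
Qed.

Lemma red_rcons_inv (x : T * bool) r : red (x :: r) -> red r.
Proof. by case: r => //= a r /andP []. Qed.

Lemma torsion_red r k : red r -> r != [::] -> (0 < k)%N -> freduce (pow r k) != [::].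
Proof.
move=> + + Hk.
have [n] := ubnP (size r); elim: n r => // n IH [//|x r'] /ltnSE Hsz Hr _.
case: (boolP (notinv (last x r') x)) => Hc.
  by rewrite freduce_red; [apply: pow_nil | apply: red_pow].
move: Hc; rewrite /notinv negbK.
case/lastP: r' Hr Hsz => [|mid b] Hr Hsz; first by rewrite /= eq_sym inv_neq.
rewrite last_rcons => /eqP Hx.
have Hb : b = inv_letter x by rewrite Hx inv_inv.
subst b.
case: mid Hr Hsz => [|y mid] Hr Hsz.
  by move: Hr; rewrite /red /= /notinv eqxx.
have Hmid : red (y :: mid).
  by move/path_sorted: Hr; rewrite /= rcons_path => /andP [].
have Hs : (size (y :: mid) < n)%N.
  by move: Hsz; rewrite /= size_rcons /=; move=> H; apply: leq_trans H; rewrite ltnS leqnSn.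
have Hne := IH (y :: mid) Hs Hmid isT.
apply/negP => /eqP H0; move/negP: Hne; apply; apply/eqP.
have E := pow_conj x (y :: mid) Hk.
set P := pow (y :: mid) k in E *.
have E2 : feq ([:: inv_letter x] ++ (x :: P ++ [:: inv_letter x]) ++ [:: x]) P.
  rewrite /= -catA /=; apply: feq_trans (feq_cancel2' _ _) _.
  rewrite -{2}(cats0 P); apply: feq_catl; exact: feq_cancel2'.
rewrite -E2 fr_cat (fr_cat (x :: _)) -E H0 /=.
by rewrite inv_inv eqxx.
Qed.

Lemma torsion x k : (0 < k)%N -> feq (pow x k) [::] -> feq x [::].
Proof.
move=> Hk H; rewrite /feq /=; apply/eqP; apply: contraT => Hne.
have := torsion_red (red_freduce x) Hne Hk.
by rewrite -(pow_feq x k) H.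
Qed.

End Tors.

Section Ren.
Variables T U : eqType.
Implicit Types (u v w : word T).

Definition rename (f : T -> U) (w : word T) : word U := map (fun l => (f l.1, l.2)) w.

Lemma fsubst_rename f w : fsubst (fun a => [:: (f a, false)]) w = rename f w.
Proof. by elim: w => // [[a b]] w IH; rewrite fsubst_cons IH; case: b. Qed.

Lemma rename_cat f u v : rename f (u ++ v) = rename f u ++ rename f v.
Proof. exact: map_cat. Qed.

Lemma rename_finv f w : rename f (finv w) = finv (rename f w).
Proof. by rewrite /rename /finv map_rev -!map_comp. Qed.

Lemma rename_gpow f a k : rename f (gpow a k) = gpow (f a) k.
Proof. by case: k => n; rewrite /rename /= map_nseq. Qed.

Lemma feq_rename f u v : feq u v -> feq (rename f u) (rename f v).
Proof. by rewrite -!fsubst_rename; apply: feq_fsubst. Qed.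

Lemma freduce_rename f : injective f -> forall w, freduce (rename f w) = rename f (freduce w).
Proof.
move=> Hf; elim=> // l w IH.
rewrite /rename map_cons -/(rename f w) freduce_cons IH freduce_cons.
case: (freduce w) => [|l' r] //=.
have -> : ((f l'.1, l'.2) == inv_letter (f l.1, l.2)) = (l' == inv_letter l).
  case: l' => a b; case: l => c d; rewrite /inv_letter /= !xpair_eqE inj_eq //.
by case: ifP.
Qed.

Lemma feq_rename_inj f u v : injective f -> feq (rename f u) (rename f v) -> feq u v.
Proof.
move=> Hf; rewrite /feq !freduce_rename // => H; apply: (inj_map _ H).
by move=> [a b] [c d] /= [/Hf -> ->].
Qed.

End Ren.

Lemma rename_comp (T U V : eqType) (f : U -> V) (g : T -> U) w :
  rename f (rename g w) = rename (f \o g) w.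
Proof. by rewrite /rename -map_comp. Qed.

Lemma rename_id_in (T : eqType) (f : T -> T) w : (forall a, f (f a) = a) -> rename f (rename f w) = w.
Proof. by move=> H; rewrite rename_comp /rename map_id_in // => [[a b]] _ /=; rewrite H. Qed.

Local Open Scope ring_scope.

Lemma gpow_opp (T : eqType) (a : T) k : gpow a (- k) = finv (gpow a k).
Proof.
case: k => [[|n]|n] //.
  by rewrite -NegzE /finv /gpow map_nseq rev_nseq.
by rewrite NegzE opprK /finv /gpow map_nseq rev_nseq.
Qed.

Definition sgn (e : bool) : int := if e then -1 else 1.

Lemma cons_gpow (T : eqType) (a : T) e k X :
  feq ((a, e) :: gpow a k ++ X) (gpow a (k + sgn e) ++ X).
Proof.
rewrite -cat_cons; apply: feq_catr.
case: e; case: k => [[|n]|n]; rewrite /sgn.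
- by [].
- have -> : (n.+1%:Z + -1 = n%:Z) by lia.
  exact: (feq_cancel2' (a,false) _).
- have -> : (Negz n + -1 = Negz n.+1) by rewrite !NegzE; lia.
  by [].
- by [].
- have -> : (n.+1%:Z + 1 = n.+2%:Z) by lia.
  by [].
- case: n => [|n].
    have -> : (Negz 0 + 1 = 0) by rewrite !NegzE; lia.
    exact: (feq_cancel2 (a,false) [::]).
  have -> : (Negz n.+1 + 1 = Negz n) by rewrite !NegzE; lia.
  exact: (feq_cancel2 (a,false) _).
Qed.

Lemma I2_cases (c : 'I_2) : c = gA \/ c = gB.
Proof. by case: c => [[|[|n]] Hn]; [left | right | ]; try apply: val_inj. Qed.

Lemma gpow0 (T : eqType) (a : T) : gpow a 0 = [::]. Proof. by []. Qed.

Lemma gpow_sgn (T : eqType) (a : T) e : gpow a (sgn e) = [:: (a, e)].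
Proof. by case: e. Qed.

Lemma sgn_neq0 e : sgn e != 0. Proof. by case: e. Qed.

Lemma decomp_alt (P : word 'I_2) : exists ks : seq int,
  [/\ (0 < size ks)%N, all (fun k => k != 0) (behead ks) & feq P (alt_word gA gB ks)].
Proof.
elim: P => [|[c e] P [[|k1 rest] [//= _ Hall H]]]; first by exists [:: 0].
have Hc : feq ((c, e) :: P) ((c, e) :: gpow gA k1 ++ alt_word gB gA rest) by apply: feq_cons.
clear H.
case: (I2_cases c) => Ec; subst c.
  exists ((k1 + sgn e) :: rest); split => //.
  by rewrite /=; apply: (feq_trans Hc); apply: cons_gpow.
have [Hk1|Hk1] := eqVneq k1 0.
  subst k1; rewrite gpow0 /= in Hc.
  case: rest Hall Hc => [|k2 rest2] Hall Hc.
    exists [:: 0; sgn e]; split => //=; first by rewrite sgn_neq0.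
    by rewrite gpow_sgn.
  rewrite /= in Hc Hall; case/andP: Hall => _ Hall.
  have Hc2 := feq_trans Hc (cons_gpow _ _ _ _); clear Hc.
  have [Hk2|Hk2] := eqVneq (k2 + sgn e) 0.
    rewrite Hk2 gpow0 /= in Hc2.
    case: rest2 Hall Hc2 => [|k3 rest3] Hall Hc2; first by exists [:: 0]; split.
    by exists (k3 :: rest3); split => //; case/andP: Hall.
  exists (0 :: (k2 + sgn e) :: rest2); split => //=; first by rewrite Hk2.
exists (0 :: sgn e :: k1 :: rest); split => //=; first by rewrite sgn_neq0 Hk1.
by rewrite gpow_sgn.
Qed.

Local Close Scope ring_scope.

Definition sw2 (a : 'I_2) : 'I_2 := if a == gA then gB else gA.

Lemma sw2K a : sw2 (sw2 a) = a.
Proof. by case: (I2_cases a) => ->. Qed.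

Lemma sw2_inj : injective sw2. Proof. exact: can_inj sw2K. Qed.

Lemma sw2_neq a : sw2 a <> a.
Proof. by case: (I2_cases a) => ->. Qed.

Lemma red_finv (T : eqType) (r : word T) : red r -> red (finv r).
Proof.
rewrite /red /finv rev_sorted sorted_map => H.
apply: sub_sorted H => a b; rewrite /relpre /notinv /= inv_inv.
by rewrite eq_sym.
Qed.

Lemma red_rename (T U : eqType) (f : T -> U) (r : word T) : injective f -> red r -> red (rename f r).
Proof.
move=> Hf Hr; rewrite -(freduce_red Hr) -freduce_rename //; exact: red_freduce.
Qed.

Lemma ar1 n h : odd n + h.*2 = n -> odd n -> [/\ (h < n)%N, (n - h.+1 = h)%N & n = h + h + 1].
Proof. by move=> H Ho; rewrite Ho -addnn /= in H; split; lia. Qed.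

Lemma ar2 n h : h.*2 = n -> (n - h = h)%N.
Proof. by rewrite -addnn; lia. Qed.

Lemma split_sym (r : word 'I_2) : rename sw2 r = finv r ->
  r = take (size r)./2 r ++ finv (rename sw2 (take (size r)./2 r)).
Proof.
move=> E; have Hdh := odd_double_half (size r); have Hev := @even_halfK (size r).
move: ((size r)./2) Hdh Hev => h Hdh Hev.
case: (boolP (odd (size r))) => Hodd.
  have [Hh Hh2 _] := ar1 Hdh Hodd.
  have := congr1 (fun s => nth (gA, false) s h) E.
  rewrite /rename /finv (nth_map (gA, false)) // nth_rev ?size_map //.
  rewrite (nth_map (gA, false)) ?size_map; last by rewrite Hh2.
  rewrite Hh2.
  by case: (nth _ r h) => a b [] /sw2_neq.
have E2 := congr1 (take h) E.
rewrite /rename -map_take -/(rename sw2 (take h r)) /finv take_rev size_map in E2.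
rewrite (ar2 (Hev Hodd)) -map_drop -/(finv (drop h r)) in E2.
by rewrite E2 finvK cat_take_drop.
Qed.

Definition CF2 (w : word 'I_2) (m : int) :=
  feq (rename sw2 w) (gpow gA m ++ finv w ++ gpow gB m).

Lemma sw2A : sw2 gA = gB. Proof. by []. Qed.
Lemma sw2B : sw2 gB = gA. Proof. by []. Qed.

Lemma rename_alt ks : forall a b, sw2 a = b -> sw2 b = a ->
  rename sw2 (alt_word a b ks) = alt_word b a ks.
Proof.
elim: ks => // k ks IH a b Ha Hb /=.
by rewrite rename_cat rename_gpow Ha IH.
Qed.

Lemma feq_cancel_r (T : eqType) (u v : word T) : feq (u ++ v ++ finv v) u.
Proof. by rewrite -{2}(cats0 u); apply: feq_catl; apply: feq_cancel. Qed.

Lemma feq_cancel_r' (T : eqType) (u v : word T) : feq (u ++ finv v ++ v) u.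
Proof. by rewrite -{2}(cats0 u); apply: feq_catl; apply: feq_cancel'. Qed.

Lemma ks_C2 ks m w : feq w (special_word ks m) -> CF2 w m.
Proof.
move=> H; rewrite /CF2.
set Q := alt_word gA gB ks.
have HsQ : rename sw2 Q = alt_word gB gA ks by apply: rename_alt.
apply: (feq_trans (feq_rename sw2 H)).
rewrite /special_word -/Q !rename_cat rename_finv HsQ rename_gpow sw2A.
rewrite (rename_alt ks sw2B sw2A) -/Q.
apply: feq_sym.
apply: (feq_trans (feq_catl _ (feq_catr _ (feq_finv H)))).
rewrite /special_word -/Q !finv_cat finvK -!catA.
apply: feq_cancel_l.
Qed.

Lemma C2_ks w m : CF2 w m -> exists ks : seq int,
  [/\ (0 < size ks)%N, all (fun k => k != 0%R) (behead ks) & feq w (special_word ks m)].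
Proof.
move=> H; set v := w ++ finv (gpow gA m).
have Hv : feq (rename sw2 v) (finv v).
  rewrite /v rename_cat rename_finv rename_gpow sw2A finv_cat finvK.
  apply: (feq_trans (feq_catr _ H)).
  rewrite -!catA; rewrite catA; apply: feq_cancel_r.
set r := freduce v.
have Hr : rename sw2 r = finv r.
  have Hr1 : red r := red_freduce v.
  rewrite -(freduce_red (red_rename sw2_inj Hr1)) -(freduce_red (red_finv Hr1)).
  rewrite /r -freduce_rename; last exact: sw2_inj.
  rewrite freduceK Hv; exact: (feq_finv (feq_freduce v)).
have Hsplit := split_sym Hr.
move: (take _ r) Hsplit => P Hsplit.
have [ks [Hs Hall HP]] := decomp_alt P.
exists ks; split => //.
have Hw : feq w (v ++ gpow gA m) by rewrite /v -catA; apply: feq_sym; apply: feq_cancel_r'.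
apply: (feq_trans Hw); rewrite /special_word catA; apply: feq_catr.
apply: (feq_trans (feq_freduce v)); rewrite -/r Hsplit.
apply: feq_cat => //; apply: feq_finv.
rewrite -(rename_alt ks sw2A sw2B); exact: feq_rename.
Qed.

Definition cy (a : 'I_2) : 'I_4 := if a == gA then y1 else y2.
Definition sw4 (a : 'I_4) : 'I_4 := if a == y1 then y2 else if a == y2 then y1 else a.

Lemma I4_cases (a : 'I_4) : [\/ a = x1, a = x2, a = y1 | a = y2].
Proof.
case: a => [[|[|[|[|n]]]] Hn]; [constructor 1|constructor 2|constructor 3|constructor 4|by []];
  exact: val_inj.
Qed.

Lemma cy_inj : injective cy.
Proof. by move=> a b; case: (I2_cases a) => ->; case: (I2_cases b) => ->. Qed.

Lemma wy_rename w : wy w = rename cy w.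
Proof. exact: fsubst_rename. Qed.

Definition C4 (w : word 'I_2) (m : int) :=
  feq (rename sw4 (wy w)) (gpow y1 m ++ finv (wy w) ++ gpow y2 m).

Lemma sw4_cy a : sw4 (cy a) = cy (sw2 a).
Proof. by case: (I2_cases a) => ->. Qed.

Lemma C2_C4 w m : CF2 w m <-> C4 w m.
Proof.
have E1 : rename sw4 (wy w) = rename cy (rename sw2 w).
  by rewrite wy_rename !rename_comp /rename; apply: eq_map => l /=; rewrite sw4_cy.
have E2 : gpow y1 m ++ finv (wy w) ++ gpow y2 m = rename cy (gpow gA m ++ finv w ++ gpow gB m).
  by rewrite !rename_cat rename_finv !rename_gpow wy_rename.
rewrite /C4 /CF2 E1 E2; split; first exact: feq_rename.
exact: feq_rename_inj cy_inj.
Qed.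

Definition yw (w : word 'I_4) := all (fun l => (l.1 == y1) || (l.1 == y2)) w.

Lemma yw_cat u v : yw (u ++ v) = yw u && yw v. Proof. exact: all_cat. Qed.
Lemma yw_finv u : yw (finv u) = yw u.
Proof. by rewrite /yw /finv all_rev all_map. Qed.
Lemma yw_sw4 u : yw u -> yw (rename sw4 u).
Proof. by rewrite /yw all_map; apply: sub_all => [[a b]] /=; case/orP => /eqP ->. Qed.
Lemma yw_gpow1 k : yw (gpow y1 k). Proof. by case: k => n; rewrite /yw all_nseq /= ?eqxx ?orbT. Qed.
Lemma yw_gpow2 k : yw (gpow y2 k). Proof. by case: k => n; rewrite /yw all_nseq /= ?eqxx ?orbT. Qed.
Lemma yw_wy w : yw (wy w).
Proof. by rewrite wy_rename /yw all_map; apply/allP => [[a b]] _ /=; rewrite /cy; case: ifP. Qed.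

Lemma yw_freduce u : yw u -> yw (freduce u).
Proof.
elim: u => // l u IH /= /andP [Hl Hu]; have := IH Hu.
case: (freduce u) => [|l' r] /=; first by rewrite Hl.
by case: ifP => _ /=; [case/andP | rewrite Hl => ->].
Qed.

Section Theta.
Variables (w : word 'I_2) (m : int).
Local Notation u := (wy w).
Local Notation ths := (theta_sigma w).
Local Notation thr := (theta_rho m).

Lemma ths_y Y : yw Y -> fsubst ths Y = Y.
Proof.
elim: Y => // [[a b]] Y IH /= /andP [Ha HY]; rewrite fsubst_cons IH //.
by case/orP: Ha => /eqP ->; case: b.
Qed.

Lemma thr_y Y : yw Y -> fsubst thr Y = rename sw4 Y.
Proof.
elim: Y => // [[a b]] Y IH /= /andP [Ha HY]; rewrite fsubst_cons IH //.
by case/orP: Ha => /eqP ->; case: b.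
Qed.

Lemma ths_x1 Y : yw Y -> fsubst ths ((x1, false) :: Y) = (x2, false) :: u ++ Y.
Proof. by move=> H; rewrite fsubst_cons ths_y. Qed.
Lemma ths_x2 Y : yw Y -> fsubst ths ((x2, false) :: Y) = (x1, false) :: finv u ++ Y.
Proof. by move=> H; rewrite fsubst_cons ths_y. Qed.
Lemma thr_x1 Y : yw Y -> fsubst thr ((x1, false) :: Y) = (x2, false) :: gpow y2 m ++ rename sw4 Y.
Proof. by move=> H; rewrite fsubst_cons thr_y. Qed.
Lemma thr_x2 Y : yw Y -> fsubst thr ((x2, false) :: Y) = (x1, false) :: gpow y1 (- m) ++ rename sw4 Y.
Proof. by move=> H; rewrite fsubst_cons thr_y. Qed.

Definition xs (b : bool) : 'I_4 := if b then x2 else x1.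
Definition ys (b : bool) : 'I_4 := if b then y2 else y1.

Lemma theta_rcons g s f :
  theta_act w m (rcons g s) f = fsubst (theta_letter w m s) (theta_act w m g f).
Proof. by rewrite /theta_act foldl_rcons. Qed.

Lemma theta_cons g s f :
  theta_act w m (s :: g) f = theta_act w m g (fsubst (theta_letter w m s) f).
Proof. by []. Qed.

Lemma theta_cat g h f : theta_act w m (g ++ h) f = theta_act w m h (theta_act w m g f).
Proof. by rewrite /theta_act foldl_cat. Qed.

Lemma pi2_rcons g s : pi2 (rcons g s) = ~~ pi2 g.
Proof. by rewrite /pi2 size_rcons. Qed.
Lemma nu2_rcons g s : nu2 (rcons g s) = nu2 g (+) ~~ s.
Proof. by rewrite /nu2 -cats1 count_cat /= addn0 oddD; case: s. Qed.

Lemma lit_inv g : exists Y1 Y2, [/\ yw Y1, yw Y2,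
  theta_act w m g [:: (x1, false)] = (xs (pi2 g), false) :: Y1,
  theta_act w m g [:: (x2, false)] = (xs (~~ pi2 g), false) :: Y2 &
  theta_act w m g [:: (y1, false)] = [:: (ys (nu2 g), false)] /\
  theta_act w m g [:: (y2, false)] = [:: (ys (~~ nu2 g), false)]].
Proof.
elim/last_ind: g => [|g s [Y1 [Y2 [H1 H2 E1 E2 [E3 E4]]]]].
  by exists [::], [::].
rewrite !theta_rcons E1 E2 E3 E4 pi2_rcons nu2_rcons.
case: s; case: (pi2 g); case: (nu2 g); rewrite /= ?ths_x1 ?ths_x2 ?thr_x1 ?thr_x2 //.
all: first [ eexists; eexists; split; [ | | reflexivity | reflexivity | by split ] ].
all: rewrite ?yw_cat ?yw_finv ?yw_wy ?yw_gpow1 ?yw_gpow2 ?yw_sw4 //.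
Qed.
End Theta.

Definition Fb (s : bool) (x : seq bool) : seq bool :=
  match x with
  | s' :: r => if s' == s then r else s :: s' :: r
  | [::] => [:: s]
  end.

Lemma breduce_cons s g : breduce (s :: g) = Fb s (breduce g). Proof. by []. Qed.

Definition bneq (a b : bool) := a != b.

Lemma sorted_breduce g : sorted bneq (breduce g).
Proof.
elim: g => // s g IH; rewrite breduce_cons.
case: (breduce g) IH => [|s' r] //= IH; case: ifP => H.
  by case: r IH => //= a r /andP [].
rewrite [sorted _ _]/=; apply/andP; split; last exact: IH.
by rewrite /bneq eq_sym H.
Qed.

Lemma breduce_sorted h : sorted bneq h -> breduce h = h.
Proof.
elim: h => // s h IH Hh; rewrite breduce_cons IH; last by case: h Hh {IH} => //= a h /andP [].
case: h Hh {IH} => //= s' h /andP [H _]; by rewrite /bneq eq_sym in H; rewrite (negbTE H).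
Qed.

Lemma pi2_breduce g : pi2 (breduce g) = pi2 g.
Proof.
elim: g => // s g; rewrite breduce_cons /pi2 /= => <-.
case: (breduce g) => [|s' r] //=; case: ifP => //= _; by rewrite negbK.
Qed.

Lemma nu2_breduce g : nu2 (breduce g) = nu2 g.
Proof.
elim: g => // s g IH; rewrite breduce_cons /nu2 [count _ (s :: g)]/= oddD -[odd (count negb g)]IH.
case: (breduce g) => [|s' r] /=; first by case: s; rewrite /nu2.
case: ifP => [/eqP ->|_] /=; case: s; rewrite /nu2 /= ?oddD ?negbK //.
all: case: s'; rewrite /= ?addbF ?addFb ?negbK.

Qed.

Fixpoint altb (b : bool) (n : nat) : seq bool :=
  if n is n'.+1 then b :: altb (~~ b) n' else [::].

Definition pow4 (b : bool) (k : nat) : seq bool := flatten (nseq k (altb b 4)).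

Lemma sorted_altb b n : sorted bneq (altb b n).
Proof.
elim: n b => // n IH b; case: n IH => // n IH /=.
rewrite /bneq; case: b => /=; have := IH (~~ _).
  by move/(_ true) => /= ->.
by move/(_ false) => /= ->.
Qed.

Lemma altb_add b n k : altb b (n + k) = altb b n ++ altb (if odd n then ~~ b else b) k.
Proof.
elim: n b => //= n IH b; rewrite IH; congr (_ :: _ ++ _).
by case: (odd n); case: b.
Qed.

Lemma pow4_altb b k : pow4 b k = altb b (4 * k).
Proof.
elim: k => [|k IH]; first by rewrite muln0.
have -> : pow4 b k.+1 = altb b 4 ++ pow4 b k by [].
by rewrite IH mulnS altb_add.
Qed.

Lemma sorted_form h : sorted bneq h -> h = altb (head true h) (size h).
Proof.
case: h => // b h; elim: h b => // c h IH b /= /andP [Hbc Hh].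
have Ec : c = ~~ b by move: Hbc; rewrite /bneq; case: (b); case: (c).
subst c; by rewrite {1}(IH (~~ b) Hh) /=.
Qed.

Lemma count_altb2 b n : count negb (altb b n.+2) = (count negb (altb b n)).+1.
Proof. by rewrite /= addnA; case: b. Qed.

Lemma altb_pow4 b n : ~~ odd n -> ~~ odd (count negb (altb b n)) -> exists k, altb b n = pow4 b k.
Proof.
have [N] := ubnP n; elim: N n => // N IH [|[|[|[|n]]]] /ltnSE Hn Hodd Hc.
- by exists 0.
- by [].
- by move: Hc; case: (b).
- by [].
have -> : n.+4 = 4 + n by [].
rewrite altb_add /=.
have Hn' : (n < N)%N by move: Hn => /= Hn; apply: leq_trans Hn; rewrite ltnS; do 3 apply: leqW.
have Hc' : ~~ odd (count negb (altb b n)).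
  move: Hc; have -> : n.+4 = 4 + n by []. rewrite altb_add count_cat /=.
  by case: (b); rewrite /= ?add0n ?add1n /= ?negbK.
have Ho : ~~ odd n by move: Hodd => /=; rewrite !negbK.
have [k Hk] := IH n Hn' Ho Hc'.
by exists k.+1; rewrite Hk.
Qed.

Lemma sorted_pow4 b k : sorted bneq (pow4 b k).
Proof. by rewrite pow4_altb; apply: sorted_altb. Qed.

Lemma size_pow4 b k : size (pow4 b k) = 4 * k.
Proof. by rewrite pow4_altb; elim: (4 * k) b => //= n IH b; rewrite IH. Qed.

Lemma count_pow4 b k : count negb (pow4 b k) = k.*2.
Proof.
elim: k => // k IH; have -> : pow4 b k.+1 = altb b 4 ++ pow4 b k by [].
by rewrite count_cat IH doubleS; case: (b).
Qed.

Lemma flat_ft k : flatten (nseq k.*2 [:: false; true]) = pow4 false k.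
Proof. by elim: k => //= k ->. Qed.
Lemma flat_tf k : flatten (nseq k.*2 [:: true; false]) = pow4 true k.
Proof. by elim: k => //= k ->. Qed.

Local Open Scope ring_scope.
Lemma bpow_pos (k : nat) : bpow rho_sigma (2 * k%:Z) = pow4 false k.
Proof.
have -> : (2 * k%:Z = (k.*2)%:Z) by rewrite -addnn; lia.
by rewrite /bpow flat_ft.
Qed.

Lemma bpow_neg (k : nat) : bpow rho_sigma (2 * Negz k) = pow4 true k.+1.
Proof.
have -> : (2 * Negz k = Negz (k.*2.+1)) by rewrite !NegzE -addnn; lia.
by rewrite /bpow -flat_tf.
Qed.

Lemma bpow_cases (n : int) : exists b k, bpow rho_sigma (2 * n) = pow4 b k /\ (k = 0%N -> n = 0).
Proof.
case: n => k; first by exists false, k; rewrite bpow_pos; split => // ->.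
by exists true, k.+1; rewrite bpow_neg.
Qed.
Local Close Scope ring_scope.

Lemma X2_char g : in_X2 g <-> exists n : int, beq g (bpow rho_sigma (2 * n)%R).
Proof.
split.
  case=> Hp Hn.
  have Hs := sorted_breduce g.
  have Hp' : ~~ odd (size (breduce g)) by rewrite -/(pi2 _) pi2_breduce Hp.
  have Hn' : ~~ odd (count negb (breduce g)) by rewrite -/(nu2 _) nu2_breduce Hn.
  move: (sorted_form Hs) => Eh.
  rewrite Eh in Hn'.
  have [k Hk] := altb_pow4 Hp' Hn'.
  rewrite Hk in Eh.
  case Eb: (head true (breduce g)) Eh => Eh.
    case: k Eh {Hk} => [|k] Eh.
      by exists 0%R; rewrite /beq Eh.
    exists (Negz k); rewrite /beq bpow_neg Eh breduce_sorted //; exact: sorted_pow4.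
  exists (Posz k); rewrite /beq bpow_pos Eh breduce_sorted //; exact: sorted_pow4.
case=> n; rewrite /beq; have [b [k [-> _]]] := bpow_cases n => H.
rewrite (breduce_sorted (sorted_pow4 b k)) in H.
split.
  by rewrite /in_FVP2 -pi2_breduce H /pi2 size_pow4 oddM.
by rewrite /in_FVK2 -nu2_breduce H /nu2 count_pow4 odd_double.
Qed.

Lemma bpow_nil (n : int) : beq (bpow rho_sigma (2 * n)%R) [::] -> n = 0%R.
Proof.
have [b [k [-> Hk]]] := bpow_cases n.
rewrite /beq (breduce_sorted (sorted_pow4 b k)) => H; apply: Hk.
by move: (size_pow4 b k); rewrite H /=; case: k {H}.
Qed.

Section Theta2.
Variables (w : word 'I_2) (m : int).
Local Notation u := (wy w).
Local Notation ths := (theta_sigma w).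
Local Notation thr := (theta_rho m).
Local Notation Th := (theta_act w m).

Lemma eq_fsubst (T U : eqType) (phi psi : T -> word U) (v : word T) :
  (forall a, phi a = psi a) -> fsubst phi v = fsubst psi v.
Proof. by move=> H; elim: v => // l v IH; rewrite !fsubst_cons IH /img H. Qed.

Lemma theta_fsubst g f : Th g f = fsubst (fun a => Th g [:: (a, false)]) f.
Proof.
elim/last_ind: g f => [|g s IH] f; first by rewrite fsubst_id.
rewrite theta_rcons IH fsubst_comp; apply: eq_fsubst => a.
by rewrite theta_rcons IH /= /fsubst /= cats0.
Qed.

Lemma theta_feq g f f' : feq f f' -> feq (Th g f) (Th g f').
Proof. by rewrite !(theta_fsubst g); apply: feq_fsubst. Qed.

Lemma ker_gen g : (forall a, feq (Th g [:: (a, false)]) [:: (a, false)]) -> in_ker_theta w m g.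
Proof.
move=> H f; rewrite theta_fsubst; rewrite -{2}(fsubst_id f); exact: fsubst_pw.
Qed.

Lemma freduce_xhead a Y : (a == x1) || (a == x2) -> yw Y ->
  freduce ((a, false) :: Y) = (a, false) :: freduce Y.
Proof.
move=> Ha HY; rewrite freduce_cons; have := yw_freduce HY.
case: (freduce Y) => [|[c e] r] //= /andP [Hc _].
case: ifP => // /eqP [Eca _]; subst c.
by move: Ha Hc; case/orP => /eqP ->.
Qed.

Lemma ker_parity g : in_ker_theta w m g -> pi2 g = false /\ nu2 g = false.
Proof.
move=> H; have [Y1 [Y2 [H1 H2 E1 E2 [E3 E4]]]] := lit_inv w m g.
split.
  have := H [:: (x1, false)]; rewrite /feq E1 freduce_xhead //; last by case: (pi2 g).
  by case: (pi2 g).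
by have := H [:: (y1, false)]; rewrite /feq E3; case: (nu2 g).
Qed.

Lemma ths_v1 : ths x1 = (x2, false) :: u. Proof. by []. Qed.
Lemma ths_v2 : ths x2 = (x1, false) :: finv u. Proof. by []. Qed.
Lemma thr_v1 : thr x1 = (x2, false) :: gpow y2 m. Proof. by []. Qed.
Lemma thr_v2 : thr x2 = (x1, false) :: gpow y1 (- m). Proof. by []. Qed.
Lemma sw4_y1 : sw4 y1 = y2. Proof. by []. Qed.
Lemma sw4_y2 : sw4 y2 = y1. Proof. by []. Qed.

Lemma thth s f : feq (fsubst (theta_letter w m s) (fsubst (theta_letter w m s) f)) f.
Proof.
rewrite fsubst_comp -{2}(fsubst_id f); apply: fsubst_pw => a.
case: (I4_cases a) => ->; case: s => /=; try by [].
- rewrite ths_v1 ths_x2 ?yw_wy //; apply: feq_cons; exact: feq_cancel'.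
- rewrite thr_v1 thr_x2 ?yw_gpow2 // rename_gpow sw4_y2 gpow_opp.
  apply: feq_cons; exact: feq_cancel'.
- rewrite ths_v2 ths_x1 ?yw_finv ?yw_wy //; apply: feq_cons; exact: feq_cancel.
- rewrite thr_v2 thr_x1 ?yw_gpow1 // rename_gpow sw4_y1 gpow_opp.
  apply: feq_cons; exact: feq_cancel.
Qed.

Lemma theta_breduce g f : feq (Th g f) (Th (breduce g) f).
Proof.
elim: g f => // s g IH f; rewrite theta_cons breduce_cons.
apply: (feq_trans (IH _)).
case: (breduce g) => [|s' r] //; rewrite [Fb _ _]/=; case: ifP => // /eqP ->.
rewrite theta_cons; apply: theta_feq; exact: thth.
Qed.

Lemma ker_breduce g : in_ker_theta w m g -> in_ker_theta w m (breduce g).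
Proof. by move=> H f; apply: feq_trans (H f); apply: feq_sym; apply: theta_breduce. Qed.

End Theta2.

Section Alg.
Variable T : eqType.
Implicit Types (u su A B p q x y : word T).

Lemma fsub p q x y : feq x y -> feq (p ++ x ++ q) (p ++ y ++ q).
Proof. by move=> H; apply: feq_catl; apply: feq_catr. Qed.

Lemma alg1 u su A B : feq su (A ++ finv u ++ B) ->
  [/\ feq (finv u ++ B ++ finv su ++ A) [::], feq (u ++ finv A ++ su ++ finv B) [::],
      feq (finv A ++ su ++ finv B ++ u) [::] & feq (B ++ finv su ++ A ++ finv u) [::]].
Proof.
move=> H; have Hf : feq (finv su) (finv B ++ u ++ finv A).
  by have := feq_finv H; rewrite !finv_cat finvK -catA.
split.
- rewrite (catA (finv u)); apply: (feq_trans (fsub _ _ Hf)); rewrite -!catA.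
  apply: (feq_trans (feq_catl _ (feq_cancel_l B _))).
  apply: (feq_trans (feq_cancel_l' u _)); exact: feq_cancel'.
- rewrite (catA u); apply: (feq_trans (fsub _ _ H)); rewrite -!catA.
  apply: (feq_trans (feq_catl _ (feq_cancel_l' A _))).
  apply: (feq_trans (feq_cancel_l u _)); exact: feq_cancel.
- apply: (feq_trans (fsub _ _ H)); rewrite -!catA.
  apply: (feq_trans (feq_cancel_l' A _)).
  apply: (feq_trans (feq_catl _ (feq_cancel_l B _))); exact: feq_cancel'.
- apply: (feq_trans (fsub _ _ Hf)); rewrite -!catA.
  apply: (feq_trans (feq_cancel_l B _)).
  apply: (feq_trans (feq_catl _ (feq_cancel_l' A _))); exact: feq_cancel.
Qed.

Lemma solve_mid p x q : feq (p ++ x ++ q) [::] -> feq x (finv p ++ finv q).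
Proof.
move=> H; apply: (@feq_trans _ _ (finv p ++ (p ++ x ++ q) ++ finv q)).
  rewrite -!catA; apply: feq_sym.
  apply: (feq_trans (feq_cancel_l' p _)); exact: feq_cancel_r.
by apply: (feq_trans (fsub _ _ H)).
Qed.

Lemma alg2 u su A B : feq (u ++ finv A ++ su ++ finv B) [::] -> feq su (A ++ finv u ++ B).
Proof.
move=> H; rewrite catA in H; move/solve_mid: H; rewrite finv_cat !finvK -catA; exact.
Qed.

Lemma alg3 u su A B : feq (B ++ finv su ++ A ++ finv u) [::] -> feq su (A ++ finv u ++ B).
Proof.
move=> /solve_mid H; have := feq_finv H.
by rewrite finvK finv_cat !finvK -catA.
Qed.
End Alg.

Lemma sw4K a : sw4 (sw4 a) = a.
Proof. by case: (I4_cases a) => ->. Qed.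

Lemma yw_sw4E v : yw (rename sw4 v) = yw v.
Proof.
by rewrite /yw all_map; apply: eq_all => [[a b]] /=; case: (I4_cases a) => ->.
Qed.

Lemma fsubst_fixy (phi : 'I_4 -> word 'I_4) Y :
  phi y1 = [:: (y1, false)] -> phi y2 = [:: (y2, false)] -> yw Y -> fsubst phi Y = Y.
Proof.
move=> H1 H2; elim: Y => // [[a b]] Y IH /= /andP [Ha HY]; rewrite fsubst_cons IH //.
by rewrite /img /=; case/orP: Ha => /eqP ->; rewrite ?H1 ?H2; case: b.
Qed.

Lemma pow_rcons (T : eqType) (Z : word T) k : pow Z k ++ Z = pow Z k.+1.
Proof. elim: k => [|k IH]; first by rewrite /pow /= cats0. by rewrite powS -catA IH. Qed.

Section Theta3.
Variables (w : word 'I_2) (m : int).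
Local Notation u := (wy w).
Local Notation su := (rename sw4 (wy w)).
Local Notation A := (gpow y1 m).
Local Notation B := (gpow y2 m).
Local Notation Th := (theta_act w m).

Ltac ywt := rewrite ?yw_cat ?yw_finv ?yw_sw4E ?yw_wy ?yw_gpow1 ?yw_gpow2.
Ltac thsimp := repeat (first [ rewrite thr_x1; last by ywt | rewrite thr_x2; last by ywt
   | rewrite ths_x1; last by ywt | rewrite ths_x2; last by ywt ]);
   rewrite ?rename_cat ?rename_finv ?rename_gpow ?sw4_y1 ?sw4_y2 ?(rename_id_in _ sw4K) ?cats0 /=.

Definition Z1 (b : bool) := if b then finv A ++ su ++ finv B ++ u else finv u ++ B ++ finv su ++ A.
Definition Z2 (b : bool) := if b then B ++ finv su ++ A ++ finv u else u ++ finv A ++ su ++ finv B.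

Lemma t4_x1 b : Th (altb b 4) [:: (x1, false)] = (x1, false) :: Z1 b.
Proof. by case: b; rewrite [LHS]/=; do 4 thsimp; rewrite /Z1 ?gpow_opp. Qed.
Lemma t4_x2 b : Th (altb b 4) [:: (x2, false)] = (x2, false) :: Z2 b.
Proof. by case: b; rewrite [LHS]/=; do 4 thsimp; rewrite /Z2 ?gpow_opp. Qed.
Lemma t4_y1 b : Th (altb b 4) [:: (y1, false)] = [:: (y1, false)].
Proof. by case: b. Qed.
Lemma t4_y2 b : Th (altb b 4) [:: (y2, false)] = [:: (y2, false)].
Proof. by case: b. Qed.

Lemma yw_Z2 b : yw (Z2 b).
Proof. by case: b; rewrite /Z2; ywt. Qed.

Lemma theta_cons1 g a Y : Th g ((a, false) :: Y) = Th g [:: (a, false)] ++ Th g Y.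
Proof. by rewrite !(theta_fsubst _ _ g) fsubst_cons /= /fsubst /= cats0. Qed.

Lemma pow4_y b k Y : yw Y -> Th (pow4 b k) Y = Y.
Proof.
elim: k Y => // k IH Y HY.
have -> : pow4 b k.+1 = altb b 4 ++ pow4 b k by [].
rewrite theta_cat (theta_fsubst _ _ (altb b 4)) fsubst_fixy ?t4_y1 ?t4_y2 //; exact: IH.
Qed.

Lemma pow4_x2 b k : Th (pow4 b k) [:: (x2, false)] = (x2, false) :: pow (Z2 b) k.
Proof.
elim: k => // k IH.
have -> : pow4 b k.+1 = altb b 4 ++ pow4 b k by [].
by rewrite theta_cat t4_x2 theta_cons1 IH pow4_y ?yw_Z2 // cat_cons pow_rcons.
Qed.

Hypothesis HC : C4 w m.

Lemma Zs_nil b : feq (Z1 b) [::] /\ feq (Z2 b) [::].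
Proof. have [H1 H2 H3 H4] := alg1 HC; by case: b. Qed.

Lemma pow4_ker b k : in_ker_theta w m (pow4 b k).
Proof.
elim: k => [|k IH]; first by move=> f.
have -> : pow4 b k.+1 = altb b 4 ++ pow4 b k by [].
have Hk : in_ker_theta w m (altb b 4).
  apply: ker_gen => a; have [H1 H2] := Zs_nil b.
  case: (I4_cases a) => ->; rewrite ?t4_x1 ?t4_x2 ?t4_y1 ?t4_y2 //; exact: feq_cons.
move=> f; rewrite theta_cat; apply: (feq_trans _ (IH f)); apply: theta_feq; exact: Hk.
Qed.

Lemma X2_ker g : in_X2 g -> in_ker_theta w m g.
Proof.
move/X2_char => [n]; rewrite /beq; have [b [k [-> _]]] := bpow_cases n.
rewrite (breduce_sorted (sorted_pow4 b k)) => H f.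
apply: (feq_trans (theta_breduce _ _ _ _)); rewrite H; exact: pow4_ker.
Qed.

End Theta3.

Lemma ker_C4 w m g : in_ker_theta w m g -> ~ beq g [::] -> C4 w m.
Proof.
move=> Hk Hne; have Hk' := ker_breduce Hk.
have [Hp Hn] := ker_parity Hk'.
have Hs := sorted_breduce g.
have Hp' : ~~ odd (size (breduce g)) by rewrite -/(pi2 _) Hp.
have Hn' : ~~ odd (count negb (breduce g)) by rewrite -/(nu2 _) Hn.
move: (sorted_form Hs) => Eh; rewrite Eh in Hn'.
have [k Hk2] := altb_pow4 Hp' Hn'; rewrite Hk2 in Eh.
set b := head true (breduce g) in Eh.
case: k Eh {Hk2} => [|k] Eh; first by apply: False_ind; apply: Hne; rewrite /beq Eh.
have := Hk' [:: (x2, false)]; rewrite Eh pow4_x2.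
move=> H; have H2 : feq (pow (Z2 w m b) k.+1) [::].
  apply: (feq_trans (feq_sym (feq_cancel2' (x2, false) _))).
  apply: (feq_trans (feq_cons _ H)); exact: (feq_cancel2' (x2, false) [::]).
have := torsion (ltn0Sn k) H2; rewrite /Z2 /C4; case: (b).
  exact: alg3.
exact: alg2.
Qed.

Lemma nf_C4 w m1 : ~ theta_faithful w m1 -> C4 w m1.
Proof.
move=> H; have [g Hg] := not_all_ex_not _ _ H.
have [Hk Hne] := imply_to_and _ _ Hg.
exact: ker_C4 Hk Hne.
Qed.

Lemma C4_nf w m1 : C4 w m1 -> ~ theta_faithful w m1.
Proof.
move=> HC Hf; have := Hf (pow4 false 1) (pow4_ker HC false 1).
by [].
Qed.

Lemma interior_of (ks : seq int) : all (fun k => k != 0%R) (behead ks) ->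
  forall i : nat, (0 < i < (size ks).-1)%N -> nth 0%R ks i <> 0%R.
Proof.
move=> /(all_nthP 0%R) H i /andP [Hi1 Hi2].
case: ks H Hi2 => [|k ks] H Hi2 //=.
case: i Hi1 Hi2 => // i _ Hi2 /=.
by apply/eqP; apply: H; apply: ltnW.
Qed.

Theorem theorem2p5 (w : word 'I_2) (m1 : int) :
  (~ theta_faithful w m1 <->
     exists ks : seq int,
       (0 < size ks)%N /\
       (forall i : nat, (0 < i < (size ks).-1)%N -> nth 0%R ks i <> 0%R) /\
       feq w (special_word ks m1))
  /\
  (~ theta_faithful w m1 ->
     (forall g : seq bool, in_ker_theta w m1 g <-> in_X2 g) /\
     (forall g : seq bool, in_X2 g <-> exists n : int, beq g (bpow rho_sigma (2 * n)%R)) /\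
     (forall n : int, beq (bpow rho_sigma (2 * n)%R) [::] -> n = 0%R)).
Proof.
split.
  split.
    move=> /nf_C4 /C2_C4 /C2_ks [ks [Hs Hall Hw]].
    by exists ks; split => //; split => //; apply: interior_of.
  move=> [ks [_ [_ Hw]]]; apply: C4_nf; apply/C2_C4; exact: ks_C2 Hw.
move=> /nf_C4 HC; split; last split.
- move=> g; split; last exact: X2_ker.
  by move/ker_parity => [Hp Hn]; split.
- exact: X2_char.
- exact: bpow_nil.
Qed.
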